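(* Let $T_n \doteq (n+1)^{-3/4}$, $A_n \doteq (n+1)^{1/4}$ and $p_n \doteq T_n/A_n = \frac{1}{n+1}$ for $n\ge 0$. Let $\{X_{n+1}\}_{n\ge0}$ be independent random variables with $X_{n+1}=A_n$ with probability $p_n$ and $X_{n+1}=0$ with probability $1-p_n$. Let $\mathcal{F}_n=\sigma(X_1,\dots,X_n)$, $z_0=0$ and $z_{n+1}=(1-T_n)z_n+X_{n+1}$ for $n\ge0$. Then $\{T_n\}$ satisfies $\sum_n T_n=\infty$, $\sum_n T_n^2<\infty$, and: (1) $\mathbb{E}[z_{n+1}\mid\mathcal{F}_n]=(1-T_n)z_n+T_n$ for all $n\ge 0$, i.e. $\{z_n\}$ satisfies $\mathbb{E}[z_{n+1}\mid \mathcal F_n]\le(1-\alpha T_n)z_n+\xi T_n$ with $\alpha=\xi=1$; (2) $\limsup_{n\to\infty} z_n=\infty$ almost surely. *)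

(* Defs.v *)
From HB Require Import structures.
From mathcomp Require Import all_boot all_order all_algebra.
From mathcomp Require Import all_classical all_reals all_analysis.
Set Implicit Arguments. Unset Strict Implicit. Unset Printing Implicit Defensive.
Import Order.TTheory GRing.Theory Num.Theory.
Import numFieldNormedType.Exports.
Local Open Scope classical_set_scope.
Local Open Scope ring_scope.

Section Defs.
Variable R : realType.

Definition Tseq (n : nat) : R := (n.+1%:R) `^ (- (3 / 4)).
Definition Aseq (n : nat) : R := (n.+1%:R) `^ (1 / 4).
Definition pseq (n : nat) : R := Tseq n / Aseq n.

Context d (T : measurableType d) (P : probability T R).

Fixpoint zseq (X : nat -> T -> R) (n : nat) : T -> R :=
  match n with
  | 0%N => fun _ => 0
  | m.+1 => fun x => (1 - Tseq m) * zseq X m x + X m.+1 x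
  end.

Definition gen_Fn (X : nat -> T -> R) (n : nat) : set_system T :=
  [set A | exists k (B : set R),
     [/\ (0 < k <= n)%N, measurable B & A = X k @^-1` B]].

Definition Fn (X : nat -> T -> R) (n : nat) : set_system T := <<s gen_Fn X n >>.

Definition mutually_independent (X : nat -> T -> R) : Prop :=
  forall (I : seq nat) (B : nat -> set R), uniq I ->
    (forall i, i \in I -> measurable (B i)) ->
    P (\big[setI/setT]_(i <- I) (X i.+1 @^-1` B i)) =
    (\prod_(i <- I) P (X i.+1 @^-1` B i))%E.

(* Y is a version of the conditional expectation E[Z | F]
   (F a sigma-algebra on T contained in the measurable sets) *)
Definition is_cond_exp (F : set_system T) (Z Y : T -> R) : Prop :=
  [/\ forall B : set R, measurable B -> F (Y @^-1` B),
      P.-integrable setT (EFin \o Z),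
      P.-integrable setT (EFin \o Y) &
      forall A, F A -> (\int[P]_(x in A) (Z x)%:E = \int[P]_(x in A) (Y x)%:E)%E].

End Defs.

(* Main.v *)
Require Import Defs.
From HB Require Import structures.
From mathcomp Require Import all_boot all_order all_algebra.
From mathcomp Require Import all_classical all_reals all_analysis.
From mathcomp Require Import ring lra measurable_realfun.
Import Order.TTheory GRing.Theory Num.Theory.
Import numFieldNormedType.Exports.
Local Open Scope classical_set_scope.
Local Open Scope ring_scope.

Section seqfacts.
Variable R : realType.

Lemma Tgt0 n : 0 < Tseq R n.
Proof. by rewrite /Tseq powR_gt0// ltr0n. Qed.

Lemma Agt0 n : 0 < Aseq R n.
Proof. by rewrite /Aseq powR_gt0// ltr0n. Qed.

Lemma pseqE n : pseq R n = n.+1%:R^-1.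
Proof.
rewrite /pseq /Tseq /Aseq -powRB; last by rewrite pnatr_eq0 implybT.
rewrite (_ : - (3/4) - 1/4 = - 1 :> R); last by field.
by rewrite powR_inv1.
Qed.

Lemma ApT n : Aseq R n * pseq R n = Tseq R n.
Proof. by rewrite /pseq mulrC divfK// gt_eqF// Agt0. Qed.

Lemma Tle1 n : Tseq R n <= 1.
Proof.
rewrite /Tseq powRN invf_le1 ?powR_gt0 ?ltr0n//.
rewrite -[X in X <= _](powRr0 (n.+1%:R)) ler_powR// ?ler1n//; lra.
Qed.

Lemma Ale n m : (n <= m)%N -> Aseq R n <= Aseq R m.
Proof.
move=> nm; rewrite /Aseq ge0_ler_powR// ?nnegrE ?ler0n ?ler_nat//; lra.
Qed.

Lemma Aunbounded (M : R) : exists N, forall n, (N <= n)%N -> M <= Aseq R n.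
Proof.
exists (Num.truncn (`|M| `^ 4)) => n Nn.
apply: (le_trans (ler_norm M)).
have -> : `|M| = (`|M| `^ 4) `^ (1/4).
  by rewrite -powRrM (_ : 4 * (1/4) = 1 :> R) ?powRr1//; field.
rewrite /Aseq ge0_ler_powR ?nnegrE ?powR_ge0 ?ler0n//.
apply: ltW; apply: (lt_le_trans (Num.Theory.truncnS_gt _)).
by rewrite ler_nat ltnS.
Qed.

Lemma series_T_dvg : [series Tseq R k]_k @ \oo --> +oo.
Proof.
apply: nondecreasing_dvgn_lt.
  by apply: nondecreasing_series => k _ _; exact/ltW/Tgt0.
have -> : [series Tseq R k]_k = series (riemannR (3/4)).
  by congr series; apply/funext => k; rewrite /Tseq /= powRN.
apply: dvg_riemannR; apply/andP; split; lra.
Qed.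

Lemma key_ineq (a b : R) : 0 < a -> a <= b -> b ^+ 2 = a ^+ 2 + 1 ->
  (b ^+ 3)^-1 <= 2 * (a^-1 - b^-1).
Proof.
move=> a0 ab hb.
have b0 : 0 < b by apply: lt_le_trans ab.
rewrite -subr_ge0.
have -> : 2 * (a^-1 - b^-1) - (b ^+ 3)^-1 =
   ((b - a) * (2 * b^+2 - a * (a + b))) / (a * b^+3).
  rewrite (_ : (b - a) * (2 * b^+2 - a * (a + b)) = 2 * b^+2 * (b - a) - a).
    by field; rewrite !gt_eqF.
  have h1 : a = a * (b^+2 - a^+2) by rewrite hb; ring.
  by rewrite [X in _ = _ - X]h1; ring.
apply: divr_ge0; last by rewrite mulr_ge0 ?exprn_ge0 ?ltW.
apply: mulr_ge0; first lra.
rewrite subr_ge0 mulrDr -expr2 [2 * _]mulr_natl mulr2n.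
apply: lerD; first by rewrite hb lerDl.
by rewrite expr2 ler_pM2r.
Qed.

Definition gs (j : nat) : R := (Num.sqrt j.+1%:R)^-1.

Lemma T2E k : Tseq R k ^+ 2 = (Num.sqrt k.+1%:R ^+ 3)^-1.
Proof.
rewrite /Tseq -powR_mulrn ?powR_ge0// -powRrM.
rewrite (_ : - (3/4) * 2%:R = - (2^-1) * 3%:R :> R); last by field.
rewrite powRrM powR_mulrn ?powR_ge0// powRN powR12_sqrt ?ler0n//.
by rewrite exprVn.
Qed.

Lemma T2_le k : Tseq R k.+1 ^+ 2 <= 2 * (gs k - gs k.+1).
Proof.
rewrite T2E /gs; apply: key_ineq.
- by rewrite sqrtr_gt0 ltr0n.
- by rewrite ler_sqrt ?ltr0n// ler_nat.
- by rewrite !sqr_sqrtr ?ler0n// -natr1.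
Qed.

Lemma series_T2_cvg : cvg ([series (Tseq R k) ^+ 2]_k @ \oo).
Proof.
apply: nondecreasing_is_cvgn.
  by apply: nondecreasing_series => k _ _; exact: sqr_ge0.
exists 3 => _ [n _ <-] /=.
case: n => [|n]; first by rewrite /series /= big_geq.
rewrite /series /= big_nat_recl//.
have -> : 3 = 1 + 2 * gs 0 :> R by rewrite /gs sqrtr1 invr1; lra.
apply: lerD; first by rewrite T2E sqrtr1 expr1n invr1.
have H : forall m, \sum_(0 <= i < m) Tseq R i.+1 ^+ 2 <= 2 * (gs 0 - gs m).
  elim=> [|m IH]; first by rewrite big_geq// subrr mulr0.
  rewrite big_nat_recr//= (le_trans (lerD IH (T2_le m)))//; lra.
apply: (le_trans (H n)).
have : 0 <= gs n by rewrite /gs invr_ge0 sqrtr_ge0.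
lra.
Qed.

End seqfacts.

Section B.
Variables (R : realType) (d : measure_display) (T : measurableType d)
  (P : probability T R) (X : nat -> T -> R)
  (Xmeas : forall n, measurable_fun setT (X n.+1))
  (Xindep : mutually_independent P X)
  (XA : forall n, P (X n.+1 @^-1` [set Aseq R n]) = (pseq R n)%:E)
  (X0 : forall n, P (X n.+1 @^-1` [set 0]) = (1 - pseq R n)%:E).

Lemma mpre k B : measurable B -> measurable (X k.+1 @^-1` B).
Proof. by move=> mB; rewrite -[X _ @^-1` _]setTI; exact: Xmeas. Qed.

Lemma probE (A : set T) : (P : {content set T -> \bar R}) A = P A.
Proof. by []. Qed.

Lemma probE2 (A : set T) : (P : {measure set T -> \bar R}) A = P A.
Proof. by []. Qed.

Definition Ev k := X k.+1 @^-1` [set Aseq R k].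
Definition Nv k := X k.+1 @^-1` (~` ([set Aseq R k] `|` [set 0])).

Lemma mEv k : measurable (Ev k). Proof. exact: mpre. Qed.
Lemma mNv k : measurable (Nv k).
Proof. by apply: mpre; apply: measurableC; apply: measurableU. Qed.

Lemma PNv k : P (Nv k) = 0%E.
Proof.
rewrite /Nv -preimage_setC probability_setC; last first.
  by apply: mpre; apply: measurableU.
rewrite preimage_setU measureU; [|exact: mpre|exact: mpre|].
  rewrite !probE XA X0.
  have h (a b : R) : (a%:E + b%:E)%R = (a + b)%:E :> \bar R by [].
  rewrite h (_ : pseq R k + (1 - pseq R k) = 1); last by ring.
  by rewrite subrr.
apply/seteqP; split => x //= [-> h].
by move: (Agt0 R k); rewrite h ltxx.
Qed.

Lemma Xae k x : ~ Nv k x -> X k.+1 x = Aseq R k * \1_(Ev k) x.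
Proof.
rewrite /Nv /= => /contrapT [h|h].
  by rewrite indicE mem_set// ?mulr1//.
rewrite indicE memNset ?mulr0//= /Ev /= h => h'.
by move: (Agt0 R k); rewrite -h' ltxx.
Qed.

Lemma Xge0 k x : ~ Nv k x -> 0 <= X k.+1 x.
Proof. by move/Xae ->; rewrite mulr_ge0 ?indic_ge0// ltW// Agt0. Qed.


Local Open Scope ereal_scope.

Lemma integrable_aeN (N : set T) (f g : T -> \bar R) : measurable N ->
  P N = 0 -> measurable_fun setT f -> (forall x, ~ N x -> f x = g x) ->
  P.-integrable setT g -> P.-integrable setT f.
Proof.
move=> mN N0 mf fg ig; apply/(negligible_integrable mN) => //.
apply: (@eq_integrable _ _ _ _ _ (measurableD measurableT mN) g).
  by move=> x /set_mem [_ Nx]; rewrite fg.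
by apply: integrableS ig => //; exact: measurableD.
Qed.

Lemma integral_aeN (N D : set T) (f g : T -> \bar R) : measurable N ->
  P N = 0 -> measurable D -> measurable_fun D f -> measurable_fun D g ->
  (forall x, ~ N x -> f x = g x) ->
  \int[P]_(x in D) f x = \int[P]_(x in D) g x.
Proof.
move=> mN N0 mD mf mg fg; apply: (ae_eq_integral g) => //.
exists N; split => // x /= /not_implyP [Dx fgx].
by apply: contrapT => Nx; apply: fgx; exact: fg.
Qed.

Lemma mindA k : measurable_fun setT (fun x => Aseq R k * \1_(Ev k) x)%R.
Proof. by apply: measurable_funM => //; exact: measurable_indic (mEv k). Qed.

Lemma Xint k : P.-integrable setT (EFin \o X k.+1).
Proof.
apply: (@integrable_aeN (Nv k) _ (fun x => (Aseq R k)%:E * (\1_(Ev k) x)%:E)).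
- exact: mNv.
- exact: PNv.
- exact/measurable_EFinP.
- by move=> x Nx /=; rewrite (Xae _ _ Nx).
- by apply: integrableZl => //; apply: integrable_indic; exact: mEv.
Qed.

Lemma Xint_on k A : measurable A ->
  \int[P]_(x in A) (X k.+1 x)%:E = (Aseq R k)%:E * P (Ev k `&` A).
Proof.
move=> mA.
rewrite (@integral_aeN (Nv k) _ _ (fun x => (Aseq R k)%:E * (\1_(Ev k) x)%:E)).
- rewrite integralZl//; first by rewrite integral_indic//; exact: mEv.
  by apply: (integrableS measurableT) => //; apply: integrable_indic; exact: mEv.
- exact: mNv.
- exact: PNv.
- done.
- by apply/measurable_EFinP; exact: measurable_funS (Xmeas k).
- apply: measurable_funS (_ : measurable_fun setT _) => //.
  exact/measurable_EFinP/mindA.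
- by move=> x Nx /=; rewrite (Xae _ _ Nx).
Qed.

Lemma zint n : P.-integrable setT (EFin \o zseq X n).
Proof.
elim: n => [|n IH].
  by apply: (@eq_integrable _ _ _ _ _ measurableT (cst 0)) => //; exact: integrable0.
apply: (@eq_integrable _ _ _ _ _ measurableT (fun x => (1 - Tseq R n)%:E * (zseq X n x)%:E + (X n.+1 x)%:E)).
  by move=> x _ /=; rewrite -EFinM -EFinD.
apply: (@integrableD _ _ _ _ _ _ (fun x => (1 - Tseq R n)%:E * (zseq X n x)%:E)) => //.
  exact: integrableZl.
exact: Xint.
Qed.

Lemma zmeas n : measurable_fun setT (zseq X n).
Proof. by apply/measurable_EFinP; exact: measurable_int (zint n). Qed.

Local Close Scope ereal_scope.

Definition piF n : set_system T := [set S | exists B : nat -> set R,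
  (forall i, measurable (B i)) /\
  S = \big[setI/setT]_(0 <= i < n) (X i.+1 @^-1` B i)].

Lemma piF_setI n : setI_closed (piF n).
Proof.
move=> S1 S2 [B1 [mB1 ->]] [B2 [mB2 ->]].
exists (fun i => B1 i `&` B2 i); split; first by move=> i; exact: measurableI.
rewrite -big_split /=; apply: eq_bigr => i _; exact: preimage_setI.
Qed.

Lemma gen_piF n : gen_Fn X n `<=` piF n.
Proof.
move=> _ [k [B [/andP[k0 kn] mB ->]]].
exists (fun i => if i == k.-1 then B else setT); split.
  by move=> i; case: ifP.
rewrite (bigD1_seq k.-1) /=; last exact: iota_uniq.
  rewrite eqxx big1 ?setIT ?prednK//.
  by move=> i /negPf ->; exact: preimage_setT.
by rewrite mem_index_iota; case: k k0 kn => // k _ /=; rewrite prednK.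
Qed.

Local Open Scope ereal_scope.

Lemma indep_pi n S : piF n S -> P (S `&` Ev n) = P S * P (Ev n).
Proof.
move=> [B [mB ->]].
pose B' i := if i == n then [set Aseq R n] else B i.
have mB' i : measurable (B' i) by rewrite /B'; case: ifP.
have hS : \big[setI/setT]_(0 <= i < n) (X i.+1 @^-1` B i) =
          \big[setI/setT]_(0 <= i < n) (X i.+1 @^-1` B' i).
  apply: eq_big_nat => i /andP[_ ilt]; by rewrite /B' ltn_eqF.
have hP : \prod_(0 <= i < n) P (X i.+1 @^-1` B i) =
          \prod_(0 <= i < n) P (X i.+1 @^-1` B' i).
  apply: eq_big_nat => i /andP[_ ilt]; by rewrite /B' ltn_eqF.
have hE : Ev n = X n.+1 @^-1` B' n by rewrite /B' eqxx.
have := Xindep (index_iota 0 n.+1) B' (iota_uniq _ _) (fun i _ => mB' i).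
rewrite big_nat_recr//= big_nat_recr//= -hS -hE => ->.
rewrite hS (Xindep (index_iota 0 n) B' (iota_uniq _ _) (fun i _ => mB' i)).
by rewrite -hP.
Qed.

Definition Hind n : set_system T :=
  [set S | measurable S /\ P (S `&` Ev n) = P S * P (Ev n)].

Lemma PfinE (A : set T) : measurable A -> P A = (fine (P A))%:E.
Proof. by move=> mA; rewrite fineK// fin_num_measure. Qed.

Lemma Hind_dynkin n : dynkin (Hind n).
Proof.
split.
- split; first exact: measurableT.
  by rewrite setTI probability_setT mul1e.
- move=> S [mS hS]; split; first exact: measurableC.
  have mE := mEv n.
  rewrite setIC -setDE measureD//; last first.
    by apply: (le_lt_trans (probability_le1 _ (mEv n))); rewrite ltry.
  rewrite !probE setIC hS probability_setC//.
  rewrite (PfinE _ mS) (PfinE _ (mEv n)).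
  have gen (a b : R) : a%:E - b%:E * a%:E = (1%:E - b%:E) * a%:E.
    by change ((a - b * a)%R%:E = ((1 - b) * a)%R%:E); congr EFin; ring.
  exact: gen.
- move=> F tF HF; split.
    by apply: bigcupT_measurable => k; case: (HF k).
  rewrite setI_bigcupl measure_bigcup; last first.
  + exact: trivIset_setIr.
  + by move=> i _; apply: measurableI; [case: (HF i)|exact: mEv].
  rewrite measure_bigcup; last exact: tF.
    2: by move=> i _; case: (HF i).
  rewrite (PfinE _ (mEv n)) muleC -nneseriesZl; last by move=> i _.
  apply: eq_eseriesr => i _; rewrite muleC -(PfinE _ (mEv n)).
  by case: (HF i).
Qed.

Lemma indep_Fn n A : Fn X n A -> measurable A /\ P (A `&` Ev n) = P A * P (Ev n).
Proof.
move=> FA.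
have : <<s piF n >> A by apply: (sub_sigma_algebra2 (@gen_piF n)).
move: A {FA}; apply: (@lambda_system_subset _ _ (@piF_setI n) setT (Hind n)).
- exact/dynkin_lambda_system/Hind_dynkin.
- move=> S hS; split; last exact: indep_pi.
  move: hS => [B [mB ->]]; apply: big_ind => //.
  + by move=> A1 A2; exact: measurableI.
  + by move=> i _; exact: mpre.
- by [].
Qed.

Local Close Scope ereal_scope.

Lemma Fmeas_z n m : (m <= n)%N ->
  @measurable_fun _ _ (g_sigma_algebraType (gen_Fn X n)) R setT (zseq X m).
Proof.
elim: m => [_|m IH mn]; first exact: measurable_cst.
apply: measurable_funD.
  by apply: measurable_funM => //; apply: IH; exact: ltnW.
move=> _ B mB; rewrite setTI; apply: sub_sigma_algebra.
by exists m.+1, B; split.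
Qed.

Lemma Y_Fn n B : measurable B ->
  Fn X n ((fun x => (1 - Tseq R n) * zseq X n x + Tseq R n) @^-1` B).
Proof.
move=> mB.
have mY : @measurable_fun _ _ (g_sigma_algebraType (gen_Fn X n)) R setT
  (fun x => (1 - Tseq R n) * zseq X n x + Tseq R n).
  apply: measurable_funD => //.
  by apply: measurable_funM => //; exact: Fmeas_z.
by have := mY measurableT B mB; rewrite setTI.
Qed.

Local Open Scope ereal_scope.

Lemma condexp n : is_cond_exp P (Fn X n) (zseq X n.+1)
  (fun x => (1 - Tseq R n) * zseq X n x + Tseq R n)%R.
Proof.
have iY : P.-integrable setT
    (fun x => (1 - Tseq R n)%:E * (zseq X n x)%:E + (cst (Tseq R n)%:E) x).
  apply: integrableD => //; first exact: integrableZl (zint n).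
  exact: finite_measure_integrable_cst.
split.
- exact: Y_Fn.
- exact: zint.
- by apply: (@eq_integrable _ _ _ _ _ measurableT _ _ _ iY) => x _ /=;
     rewrite -EFinM -EFinD.
- move=> A FA; have [mA hA] := indep_Fn _ _ FA.
  have iz : P.-integrable A (fun x => (1 - Tseq R n)%:E * (zseq X n x)%:E).
    by apply: (integrableS measurableT) => //; exact: integrableZl (zint n).
  transitivity (\int[P]_(x in A) ((1 - Tseq R n)%:E * (zseq X n x)%:E + (X n.+1 x)%:E)).
    by apply: eq_integral => x _ /=; rewrite -EFinM -EFinD.
  transitivity (\int[P]_(x in A) ((1 - Tseq R n)%:E * (zseq X n x)%:E + (cst (Tseq R n)%:E) x)); last first.
    by apply: eq_integral => x _ /=; rewrite -EFinM -EFinD.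
  rewrite integralD//; last first.
    by apply: (integrableS measurableT) => //; exact: Xint.
  rewrite [RHS]integralD//; last first.
    by apply: (integrableS measurableT) => //; exact: finite_measure_integrable_cst.
  congr (_ + _).
  rewrite Xint_on// integral_cst// setIC hA (PfinE _ mA) XA.
  rewrite ?probE ?probE2 -(PfinE _ mA) (PfinE _ mA).
  change ((Aseq R n * (fine (P A) * pseq R n))%R%:E = (Tseq R n * fine (P A))%R%:E).
  by rewrite -ApT; congr EFin; ring.
Qed.

Local Close Scope ereal_scope.

Lemma prod_tele m N :
  (\prod_(m <= i < m + N) (1 - (i.+1%:R)^-1 : R)) * (m + N)%:R = m%:R.
Proof.
elim: N => [|N IH]; first by rewrite addn0 big_geq// mul1r.
rewrite addnS big_nat_recr/=; last exact: leq_addr.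
rewrite -mulrA (_ : (1 - (m + N).+1%:R^-1) * (m + N).+1%:R = (m + N)%:R :> R) ?IH//.
rewrite mulrBl mul1r mulVf ?pnatr_eq0// -natr1; ring.
Qed.

Definition Cset m := \bigcap_k ~` Ev (m + k).

Lemma mCset m : measurable (Cset m).
Proof. by apply: bigcapT_measurable => k; apply: measurableC; exact: mEv. Qed.

Local Open Scope ereal_scope.

Lemma PC_le m N : P (Cset m) <=
  (\prod_(m <= i < m + N) (1 - (i.+1%:R)^-1 : R))%:E.
Proof.
have mB i : measurable (~` [set Aseq R i]) by apply: measurableC.
apply: (@le_trans _ _ (P (\big[setI/setT]_(m <= i < m + N)
    (X i.+1 @^-1` (~` [set Aseq R i]))))).
  apply: le_measure; rewrite ?inE.
  - exact: mCset.
  - by apply: big_ind => //; [exact: measurableI|move=> i _; exact: mpre].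
  - move=> x Cx; rewrite big_seq; apply: (big_ind (fun A : set T => A x)) => //.
    move=> i; rewrite mem_index_iota => /andP[mi _].
    have := Cx (i - m)%N Logic.I; rewrite subnKC//.
rewrite (Xindep (index_iota m (m + N)) _ (iota_uniq _ _) (fun i _ => mB i)).
rewrite -prodEFin le_eqVlt; apply/orP; left; apply/eqP.
apply: eq_bigr => i _.
rewrite -preimage_setC probability_setC; last exact: mpre.
by rewrite XA pseqE.
Qed.

Lemma PC0 m : P (Cset m) = 0.
Proof.
have h0 : 0 <= P (Cset m) by [].
rewrite (PfinE _ (mCset m)); congr EFin.
set c := fine (P (Cset m)).
have c0 : (0 <= c)%R by rewrite /c fine_ge0.
apply/eqP; rewrite eq_le c0 andbT; apply/negPn/negP; rewrite -ltNge => cpos.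
pose N := (Num.truncn (m%:R / c)).+1.
have := PC_le m N; rewrite (PfinE _ (mCset m)) -/c lee_fin.
have hN : (0 < (m + N)%:R :> R)%R by rewrite ltr0n addnS.
have -> : (\prod_(m <= i < m + N) (1 - (i.+1%:R)^-1 : R) = m%:R / (m + N)%:R)%R.
  by rewrite -(prod_tele m N) mulfK// gt_eqF.
rewrite ler_pdivlMr//; apply/negP; rewrite -ltNge.
apply: (lt_le_trans (_ : _ < c * N%:R)%R).
  rewrite mulrC -ltr_pdivrMr//.
  exact: Num.Theory.truncnS_gt.
by rewrite ler_pM2l// ler_nat leq_addl.
Qed.

Lemma zge0 x : (forall k, ~ Nv k x) -> forall n, (0 <= zseq X n x)%R.
Proof.
move=> hx; elim=> [|n IH] //=.
apply: addr_ge0; last exact: Xge0.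
by apply: mulr_ge0 => //; rewrite subr_ge0 Tle1.
Qed.

Lemma limsup_good : {ae P, forall x, limn_esup (fun n => (zseq X n x)%:E) = +oo}.
Proof.
have hN : P.-negligible ((\bigcup_k Nv k) `|` (\bigcup_m Cset m)).
  apply: negligibleU; apply: negligible_bigcup => k.
    by exists (Nv k); split => //; [exact: mNv|exact: PNv].
  by exists (Cset k); split => //; [exact: mCset|exact: PC0].
apply: (negligibleS _ hN) => x /= hx; apply: contrapT => hx'; apply: hx.
have gN k : ~ Nv k x by move=> Nk; apply: hx'; left; exists k.
have gC m : exists j, Ev (m + j) x.
  apply: contrapT => hj; apply: hx'; right; exists m => // j _ /= Ej.
  by apply: hj; exists j.
have z0 := zge0 _ gN.
rewrite limn_esup_lim.
suff -> : esups (fun n => (zseq X n x)%:E) = fun=> +oo.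
  by apply: cvg_lim => //; exact: cvg_cst.
apply/funext => n /=.
case E : (ereal_sup (sdrop (fun n => (zseq X n x)%:E) n)) => [r| |] //.
- have [N0 hN0] := Aunbounded R (r + 1)%R.
  have [j Ej] := gC (maxn n N0).
  set k := (maxn n N0 + j)%N in Ej.
  have : (zseq X k.+1 x)%:E <= ereal_sup (sdrop (fun n => (zseq X n x)%:E) n).
    apply: ereal_sup_ubound; exists k.+1 => //=.
    by apply: leqW; rewrite /k (leq_trans (leq_maxl _ _) (leq_addr _ _)).
  rewrite E lee_fin /= Ej => hz.
  have : (r + 1 <= Aseq R k)%R.
    by apply: hN0; rewrite /k (leq_trans (leq_maxr _ _) (leq_addr _ _)).
  have : (0 <= (1 - Tseq R k) * zseq X k x)%R.
    by apply: mulr_ge0 => //; rewrite subr_ge0 Tle1.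
  move: hz => h1 h2 h3; exfalso; clear E hN; lra.
- have : (zseq X n x)%:E <= ereal_sup (sdrop (fun n => (zseq X n x)%:E) n).
    by apply: ereal_sup_ubound; exists n => /=.
  by rewrite E.
Qed.

End B.

Theorem mainTheorem1 (R : realType) (d : measure_display) (T : measurableType d)
  (P : probability T R) (X : nat -> T -> R)
  (Xmeas : forall n, measurable_fun setT (X n.+1))
  (Xindep : mutually_independent P X)
  (XA : forall n, P (X n.+1 @^-1` [set Aseq R n]) = (pseq R n)%:E)
  (X0 : forall n, P (X n.+1 @^-1` [set 0]) = (1 - pseq R n)%:E) :
  [/\ [series Tseq R k]_k @ \oo --> +oo,
      cvg ([series (Tseq R k) ^+ 2]_k @ \oo),
      (forall n, is_cond_exp P (Fn X n) (zseq X n.+1)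
                   (fun x => (1 - Tseq R n) * zseq X n x + Tseq R n)) &
      {ae P, forall x, limn_esup (fun n => (zseq X n x)%:E) = +oo%E}].
Proof.
split.
- exact: series_T_dvg.
- exact: series_T2_cvg.
- by move=> n; apply: condexp.
- by apply: limsup_good.
Qed.
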